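(* Fix $\delta>0$ and let $c_2$ be a constant such that $p(x,y):=p^0_{\epsilon^{-2}\delta}(x,y)\le c_2\epsilon/\sqrt\delta$ for all $\epsilon$ and all $x,y\in\{0,\dots,\epsilon^{-1}\}$. Let $c^*>0$, $a^*>0$ and $$\mathcal X_{c^*,a^*}=\Big\{\xi:\ |\xi|\le c^*\epsilon^{-1},\ \max_{x\neq0}\xi(x)\le\epsilon^{-a^*}\Big\}.$$ Then for every $\xi\in\mathcal X_{c^*,a^*}$, $\max_{x\in\{0,\dots,\epsilon^{-1}\}}w(x|\xi)\le c_2c^*/\sqrt\delta$. Moreover, let $b>0$ with $a^*<b/2$ and $b+a^*<1$, and $\ell=\lfloor\epsilon^{-b}\rfloor$. Then for every integer $n$ there is $c'_n$ such that for all $\xi\in\mathcal X_{c^*,a^*}$ $$P_\xi\big[\xi^0_{\epsilon^{-2}\delta}\in\mathcal X_{c^*,a^*}\big]\ge1-c'_n\epsilon^n,$$ and there is a constant $c$ such that for all $\xi\in\mathcal X_{c^*,a^*}$ $$\sup_{x\le\epsilon^{-1}-\ell+1}E_\xi\Big[\big|\mathcal A_\ell(x,\xi^0_{\epsilon^{-2}\delta})-\mathcal A_\ell(x,w(\cdot|\xi))\big|^4\Big]\le c\,\epsilon^{2b}.$$ (The constants $c'_n$, $c$ do not depend on $\epsilon$ or $\xi$.)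
   Context: $\epsilon>0$ with $\epsilon^{-1}\in\mathbb N$; configurations $\xi:\{0,\dots,\epsilon^{-1}\}\to\mathbb N$, $|\xi|=\sum_x\xi(x)$. $p^0_t(x,y)$ is the transition probability of a continuous time simple symmetric random walk on $\{0,\dots,\epsilon^{-1}\}$ which jumps by $\pm1$ with equal probability after exponential times of mean $1$, jumps leading outside the interval being suppressed. $(\xi^0_t)$ is the process of independent such random walks, with law $P_\xi$ and expectation $E_\xi$ when started from $\xi$. $w(x|\xi)=E_\xi[\xi^0_{\epsilon^{-2}\delta}(x)]=\sum_yp^0_{\epsilon^{-2}\delta}(x,y)\xi(y)$. $\mathcal A_\ell(x,f)=\frac1\ell\sum_{y=x}^{x+\ell-1}f(y)$. *)

(* Defs.v *)
From HB Require Import structures.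
From mathcomp Require Import all_boot all_order all_algebra.
From mathcomp Require Import all_classical all_reals all_analysis.
Set Implicit Arguments. Unset Strict Implicit. Unset Printing Implicit Defensive.
Import Order.TTheory GRing.Theory Num.Theory.
Local Open Scope ring_scope.

Section Defs.
Variable R : realType.

Definition site (N : nat) := 'I_N.+1.
Definition config (N : nat) := {ffun 'I_N.+1 -> nat}.

Definition mass N (xi : config N) : nat := \sum_(x : 'I_N.+1) xi x.

(* One jump attempt: +-1 with probability 1/2 each; a jump leading outside
   {0..N} is suppressed (the walker stays). *)
Definition step_mx (N : nat) : 'M[R]_(N.+1) :=
  \matrix_(x < N.+1, y < N.+1)
    ((if ((x : nat).+1 <= N)%N then ((y : nat) == x.+1)%:R else ((y : nat) == x)%:R) / 2
   + (if (0 < (x : nat))%N then ((y : nat) == x.-1)%:R else ((y : nat) == x)%:R) / 2).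

(* p^0_t(x,y): jump attempts at rate 1 (exponential times of mean 1), so the
   number of attempts by time t is Poisson(t). *)
Definition p0 (N : nat) (t : R) (x y : 'I_N.+1) : R :=
  \big[+%R/0]_(0 <= k <oo) (expR (- t) * t ^+ k / (k`!)%:R * ((step_mx N) ^+ k) x y).

Definition particles N (xi : config N) : seq 'I_N.+1 :=
  flatten [seq nseq (xi x) x | x <- enum 'I_N.+1].

Definition occ N m (f : {ffun 'I_m -> 'I_N.+1}) : config N :=
  [ffun z => #|[set i | f i == z]|].

(* E_xi[F(xi^0_t)] for independent walkers started from xi *)
Definition Exp N (t : R) (xi : config N) (F : config N -> R) : R :=
  let s := particles xi in
  \sum_(f : {ffun 'I_(size s) -> 'I_N.+1})
     (\prod_(i < size s) p0 t (nth ord0 s i) (f i)) * F (occ f).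

Definition Prob N (t : R) (xi : config N) (A : pred (config N)) : R :=
  Exp t xi (fun eta => (A eta)%:R).

Definition w N (delta : R) (xi : config N) (x : 'I_N.+1) : R :=
  Exp ((N%:R) ^+ 2 * delta) xi (fun eta => (eta x)%:R).

Definition Aavg (l x : nat) (f : nat -> R) : R :=
  l%:R^-1 * \sum_(x <= y < x + l) f y.

(* the set X_{c*,a*} for eps = 1/N *)
Definition inX N (cs as_ : R) (xi : config N) : bool :=
  ((mass xi)%:R <= cs * N%:R) &&
  [forall x : 'I_N.+1, (x != ord0) ==> ((xi x)%:R <= (N%:R) `^ as_)].

End Defs.

(* Main.v *)
Require Import Defs.
From HB Require Import structures.
From mathcomp Require Import all_boot all_order all_algebra.
From mathcomp Require Import all_classical all_reals all_analysis.
From mathcomp Require Import lra ring zify.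
Import Order.TTheory GRing.Theory Num.Theory.
Import numFieldNormedType.Exports.
Local Open Scope ring_scope.

Section S.
Variable R : realType.

Lemma sum_ind N k : (k <= N)%N -> \sum_(y : 'I_N.+1) (((y:nat) == k)%:R : R) = 1.
Proof.
move=> kN; have kN1 : (k < N.+1)%N by [].
rewrite (bigD1 (Ordinal kN1)) //= eqxx big1 ?addr0 // => y yne.
case: eqP => // h; exfalso; move/negP: yne; apply; apply/eqP; exact: val_inj.
Qed.

Lemma step_ge0 N x y : 0 <= step_mx R N x y.
Proof. by rewrite mxE; apply: addr_ge0; apply: divr_ge0 => //; case: ifP. Qed.

Lemma step_row N x : \sum_y step_mx R N x y = 1.
Proof.
under eq_bigr do rewrite mxE.
rewrite big_split /= -!big_distrl /=.
have h1 : \sum_(i < N.+1) (if ((x:nat).+1 <= N)%N then (((i:nat) == x.+1)%:R : R) else ((i:nat) == x)%:R) = 1.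
  have [h|h] := boolP ((x:nat).+1 <= N)%N; first by rewrite sum_ind.
  by rewrite sum_ind // -ltnS.
have h2 : \sum_(i < N.+1) (if (0 < (x:nat))%N then (((i:nat) == x.-1)%:R : R) else ((i:nat) == x)%:R) = 1.
  have [h|h] := boolP (0 < (x:nat))%N; last by rewrite sum_ind // -ltnS.
  by rewrite sum_ind // (leq_trans (leq_pred _)) // -ltnS.
rewrite h1 h2; lra.
Qed.

Lemma pow_prop N k x : (forall y, 0 <= (step_mx R N ^+ k) x y) /\ \sum_y (step_mx R N ^+ k) x y = 1.
Proof.
elim: k x => [|k IH] x.
  split; first by move=> y; rewrite expr0 mxE; case: eqP.
  by rewrite expr0; under eq_bigr do rewrite mxE; rewrite (bigD1 x) //= eqxx big1 ?addr0 // => y /negbTE; rewrite eq_sym => ->.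
rewrite exprSr -mulmxE; split.
  by move=> y; rewrite mxE; apply: sumr_ge0 => i _; apply: mulr_ge0; [case: (IH x)|apply: step_ge0].
under eq_bigr do rewrite mxE.
rewrite exchange_big /=.
under eq_bigr do rewrite -mulr_sumr step_row mulr1.
by case: (IH x).
Qed.

Lemma pow_le1 N k x y : (step_mx R N ^+ k) x y <= 1.
Proof.
case: (pow_prop N k x) => h0 <-.
by rewrite (bigD1 y) //= lerDl sumr_ge0.
Qed.

Lemma lim_sumr (I : Type) (r : seq I) (u : I -> nat -> R) :
  (forall i, cvgn (u i)) -> limn (fun n => \sum_(i <- r) u i n) = \sum_(i <- r) limn (u i).
Proof.
move=> cu; apply: cvg_lim => //.
elim: r => [|i r IH].
  under eq_cvg do rewrite big_nil.
  by rewrite big_nil; exact: cvg_cst.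
under eq_cvg do rewrite big_cons.
rewrite big_cons; exact: (cvgD (cu i) IH).
Qed.

Definition term N (t : R) (x y : 'I_N.+1) k :=
  expR (- t) * t ^+ k / (k`!)%:R * ((step_mx R N) ^+ k) x y.

Lemma p0E N t x y : p0 t x y = limn (series (@term N t x y)).
Proof. by []. Qed.

Section T.
Variables (N : nat) (t : R).
Hypothesis t0 : 0 <= t.

Lemma coef_ge0 k : 0 <= expR (- t) * t ^+ k / (k`!)%:R.
Proof. by rewrite !mulr_ge0 ?invr_ge0 ?expR_ge0 ?exprn_ge0. Qed.

Lemma term_ge0 x y k : 0 <= @term N t x y k.
Proof. by rewrite /term mulr_ge0 ?coef_ge0 //; case: (pow_prop N k x). Qed.

Lemma term_le x y k : @term N t x y k <= exp_coeff t k.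
Proof.
have he := expR_ge0 (- t).
have he1 : expR (- t) <= 1 by rewrite expR_le1 oppr_le0.
have hc : 0 <= t ^+ k / (k`!)%:R by rewrite divr_ge0 ?exprn_ge0.
have hm0 : 0 <= ((step_mx R N) ^+ k) x y by case: (pow_prop N k x).
have hm1 := pow_le1 N k x y.
rewrite /term /exp_coeff /= -(mulrA (expR (-t))).
move: hc hm0 hm1; set c := t ^+ k / _; set m := _ x y => hc hm0 hm1.
have hem : expR (- t) * m <= 1 by nra.
have : 0 <= c * (1 - expR (- t) * m) by apply: mulr_ge0; lra.
lra.
Qed.

Lemma cvg_term x y : cvgn (series (@term N t x y)).
Proof.
apply: (@series_le_cvg _ _ (exp_coeff t)).
- exact: term_ge0.
- by move=> n; rewrite /exp_coeff /= divr_ge0 ?exprn_ge0.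
- exact: term_le.
exact: is_cvg_series_exp_coeff.
Qed.

Lemma p0_ge0 (x y : 'I_N.+1) : 0 <= p0 t x y.
Proof.
rewrite p0E; apply: le_trans (nondecreasing_cvgn_le _ (cvg_term x y) 0).
  by rewrite /series /= big_geq.
by apply: nondecreasing_series => n _ _; apply: term_ge0.
Qed.

Lemma p0_row (x : 'I_N.+1) : \sum_y p0 t x y = 1.
Proof.
under eq_bigr do rewrite p0E.
rewrite -lim_sumr; last by move=> i; exact: cvg_term.
rewrite (_ : (fun n => _) = (fun n => expR (- t) * series (exp_coeff t) n)); last first.
  apply/funext => n; rewrite /series /= exchange_big /= big_distrr /=.
  apply: eq_bigr => k _; rewrite /term -big_distrr /=.
  case: (pow_prop N k x) => _ ->; rewrite mulr1 /exp_coeff /=; lra.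
apply: cvg_lim => //.
rewrite -(expRxMexpNx_1 t) mulrC; apply: cvgM; first exact: cvg_cst.
exact: is_cvg_series_exp_coeff.
Qed.
End T.

Lemma size_particles N (xi : config N) : size (particles xi) = mass xi.
Proof.
rewrite /particles size_flatten /shape -map_comp /mass sumnE big_map big_enum /=.
by apply: eq_bigr => x _; rewrite /= size_nseq.
Qed.

Lemma card_occ N m (f : {ffun 'I_m -> 'I_N.+1}) z :
  #|[set i | f i == z]|%:R = \sum_(i < m) ((f i == z)%:R : R).
Proof.
rewrite -sumr_const big_mkcond /=; apply: eq_bigr => i _.
by rewrite inE; case: eqP.
Qed.

Lemma sum_occ N m (f : {ffun 'I_m -> 'I_N.+1}) (a : 'I_N.+1 -> R) :
  \sum_z a z * ((occ f) z)%:R = \sum_(i < m) a (f i).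
Proof.
under eq_bigr => z _ do rewrite ffunE card_occ big_distrr /=.
rewrite exchange_big /=; apply: eq_bigr => i _.
rewrite (bigD1 (f i)) //= eqxx mulr1 big1 ?addr0 // => z /negbTE.
by rewrite eq_sym => ->; rewrite mulr0.
Qed.

Lemma mass_occ N m (f : {ffun 'I_m -> 'I_N.+1}) : mass (occ f) = m.
Proof.
apply/eqP; rewrite -(eqr_nat R) /mass natr_sum.
have := @sum_occ N m f (fun _ => 1).
rewrite (eq_bigr (fun z => ((occ f z)%:R : R))); last by move=> z _; rewrite mul1r.
by move=> ->; rewrite sumr_const card_ord.
Qed.

Lemma expR_pow (y : R) m : 0 <= y -> y ^+ m.+1 / (m.+1`!)%:R <= expR y.
Proof.
move=> y0; have h := @expR_ge1Dxn R y m y0.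
lra.
Qed.

Lemma expR_inv_bound (v : R) : expR v * (1 - v) <= 1.
Proof.
have h1 := expR_ge1Dx (- v).
have h2 := expRxMexpNx_1 v.
have h3 := expR_ge0 v.
nra.
Qed.

Lemma expR_quad (u : R) : u <= 1 -> expR u <= 1 + u + 2 * u ^+ 2.
Proof.
move=> u1.
have [u0|u0] := lerP u 0.
  have h := expR_inv_bound u.
  have hp : 1 <= (1 + u + 2 * u ^+ 2) * (1 - u).
    have : 0 <= u ^+ 2 * (1 - 2 * u) by apply: mulr_ge0; [apply: sqr_ge0 | lra].
    rewrite expr2; nra.
  have : 0 <= (1 + u + 2 * u ^+ 2 - expR u) * (1 - u) by lra.
  rewrite pmulr_lge0; [lra|lra].
have hG := expR_inv_bound (u / 2).
have hE : expR u = expR (u / 2) ^+ 2.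
  by rewrite -expRM_natr; congr expR; field.
have hG0 := expR_ge0 (u / 2).
set G := expR (u / 2) in hG hE hG0.
have hp : 1 <= (1 + u + 2 * u ^+ 2) * (1 - u / 2) ^+ 2.
  have : 0 <= u ^+ 2 * ((1 - u) * (5 - 2 * u)) by
    apply: mulr_ge0; [apply: sqr_ge0| apply: mulr_ge0; lra].
  rewrite !expr2; nra.
have hE2 : expR u * (1 - u / 2) ^+ 2 <= 1.
  rewrite hE -exprMn expr2.
  have : 0 <= G * (1 - u/2) by apply: mulr_ge0; lra.
  nra.
have : 0 <= (1 + u + 2 * u ^+ 2 - expR u) * (1 - u / 2) ^+ 2 by lra.
rewrite pmulr_lge0; [lra| apply: exprn_gt0; lra].
Qed.

Lemma pow4_le (x : R) : x ^+ 4 <= 24 * (expR x + expR (- x)).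
Proof.
have e1 := expR_ge0 x; have e2 := expR_ge0 (- x).
have fact4 : (4`!)%:R = 24 :> R by [].
have [x0|x0] := lerP 0 x.
  have := @expR_pow x 3 x0; rewrite fact4 => h.
  have : x ^+ 4 <= 24 * expR x.
    by rewrite -ler_pdivrMl // mulrC.
  lra.
have nx0 : 0 <= - x by lra.
have := @expR_pow (- x) 3 nx0; rewrite fact4 => h.
have : (- x) ^+ 4 <= 24 * expR (- x) by rewrite -ler_pdivrMl // mulrC.
have -> : (- x) ^+ 4 = x ^+ 4 by ring.
lra.
Qed.

Section E.
Variables (N : nat) (t : R) (xi : config N).
Hypothesis t0 : 0 <= t.
Let s := particles xi.
Let p (i : nat) (z : 'I_N.+1) := p0 t (nth ord0 s i) z.

Lemma ExpE F : Exp t xi F =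
  \sum_(f : {ffun 'I_(size s) -> 'I_N.+1}) (\prod_(i < size s) p i (f i)) * F (occ f).
Proof. by []. Qed.

Lemma Exp_ext F G : (forall m (f : {ffun 'I_m -> 'I_N.+1}), F (occ f) = G (occ f)) ->
  Exp t xi F = Exp t xi G.
Proof. by move=> h; rewrite !ExpE; apply: eq_bigr => f _; rewrite h. Qed.

Lemma Exp_mono F G : (forall (f : {ffun 'I_(size s) -> 'I_N.+1}), F (occ f) <= G (occ f)) ->
  Exp t xi F <= Exp t xi G.
Proof.
move=> h; rewrite !ExpE; apply: ler_sum => f _; apply: ler_wpM2l => //.
by apply: prodr_ge0 => i _; apply: p0_ge0.
Qed.

Lemma Exp_add F G : Exp t xi (fun e => F e + G e) = Exp t xi F + Exp t xi G.
Proof. by rewrite !ExpE -big_split; apply: eq_bigr => f _; rewrite mulrDr. Qed.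

Lemma Exp_scale c F : Exp t xi (fun e => c * F e) = c * Exp t xi F.
Proof. by rewrite !ExpE big_distrr; apply: eq_bigr => f _; rewrite mulrCA. Qed.

Lemma Exp_sum (I : finType) (F : I -> config N -> R) :
  Exp t xi (fun e => \sum_i F i e) = \sum_i Exp t xi (F i).
Proof.
rewrite !ExpE exchange_big /=; apply: eq_bigr => f _; by rewrite big_distrr.
Qed.

Lemma Exp_expR (a : 'I_N.+1 -> R) :
  Exp t xi (fun e => expR (\sum_z a z * (e z)%:R)) =
  \prod_(i < size s) \sum_z p i z * expR (a z).
Proof.
rewrite ExpE bigA_distr_bigA /=; apply: eq_bigr => f _.
by rewrite sum_occ expR_sum big_split.
Qed.

Lemma Exp_cst c : Exp t xi (fun _ => c) = c.
Proof.
rewrite -[c]mulr1 Exp_scale; congr (_ * _).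
transitivity (Exp t xi (fun e => expR (\sum_z 0 * (e z)%:R))).
  by apply: Exp_ext => m f; rewrite big1 ?expR0 // => z _; rewrite mul0r.
rewrite Exp_expR big1 // => i _.
by under eq_bigr do rewrite expR0 mulr1; rewrite p0_row.
Qed.

Lemma Exp_lin (a : 'I_N.+1 -> R) :
  Exp t xi (fun e => \sum_z a z * (e z)%:R) = \sum_(i < size s) \sum_z p i z * a z.
Proof.
rewrite ExpE.
under eq_bigr do rewrite sum_occ big_distrr /=.
rewrite exchange_big /=; apply: eq_bigr => i _.
transitivity (\sum_(f : {ffun 'I_(size s) -> 'I_N.+1})
   \prod_(j < size s) (p j (f j) * (if j == i then a (f j) else 1))).
  apply: eq_bigr => f _; rewrite big_split /=; congr (_ * _).
  by rewrite (bigD1 i) //= eqxx big1 ?mulr1 // => j /negbTE ->.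
rewrite -(bigA_distr_bigA (fun (j : 'I_(size s)) z => p j z * (if j == i then a z else 1))) /=.
rewrite (bigD1 i) //= eqxx [X in _ * X]big1 ?mulr1 //.
move=> j /negbTE ji; under eq_bigr do rewrite ji mulr1.
exact: p0_row.
Qed.

Lemma Exp_occ (x : 'I_N.+1) :
  Exp t xi (fun e => (e x)%:R) = \sum_(i < size s) p i x.
Proof.
transitivity (Exp t xi (fun e => \sum_z ((z == x)%:R) * (e z)%:R)).
  apply: Exp_ext => m f; rewrite (bigD1 x) //= eqxx mul1r big1 ?addr0 // => z /negbTE ->.
  by rewrite mul0r.
rewrite Exp_lin; apply: eq_bigr => i _.
rewrite (bigD1 x) //= eqxx mulr1 big1 ?addr0 // => z /negbTE ->.
by rewrite mulr0.
Qed.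

Lemma Exp_expocc (x : 'I_N.+1) :
  Exp t xi (fun e => expR (e x)%:R) <= expR ((expR 1 - 1) * Exp t xi (fun e => (e x)%:R)).
Proof.
have -> : Exp t xi (fun e => expR (e x)%:R) = Exp t xi (fun e => expR (\sum_z ((z == x)%:R) * (e z)%:R)).
  apply: Exp_ext => m f; congr expR.
  rewrite (bigD1 x) //= eqxx mul1r big1 ?addr0 // => z /negbTE ->.
  by rewrite mul0r.
rewrite Exp_expR Exp_occ mulr_sumr expR_sum.
apply: ler_prod => i _; apply/andP; split.
  by apply: sumr_ge0 => z _; apply: mulr_ge0; [apply: p0_ge0|apply: expR_ge0].
have -> : \sum_z p i z * expR (z == x)%:R = \sum_z p i z + p i x * (expR 1 - 1).
  rewrite (bigD1 x) //= [X in _ = X + _](bigD1 x) //= eqxx.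
  rewrite (eq_bigr (fun z => p i z)); last by move=> z /negbTE ->; rewrite expR0 mulr1.
  lra.
rewrite p0_row //; have := expR_ge1Dx ((expR 1 - 1) * p i x); lra.
Qed.

Lemma q_bounds (a : 'I_N.+1 -> R) (i : nat) : (forall z, 0 <= a z <= 1) ->
  0 <= \sum_z p i z * a z <= 1.
Proof.
move=> ha; apply/andP; split.
  by apply: sumr_ge0 => z _; apply: mulr_ge0; [apply: p0_ge0 | case/andP: (ha z)].
rewrite -(@p0_row N t t0 (nth ord0 s i)); apply: ler_sum => z _.
have := @p0_ge0 N t t0 (nth ord0 s i) z; case/andP: (ha z) => h1 h2.
rewrite /p /=; nra.
Qed.

Lemma factor_bound (a : 'I_N.+1 -> R) (lam : R) (i : nat) :
  (forall z, 0 <= a z <= 1) -> -(1/2) <= lam <= 1/2 ->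
  \sum_z p i z * expR (lam * (a z - \sum_z p i z * a z)) <=
  expR (2 * lam ^+ 2 * \sum_z p i z * a z).
Proof.
move=> ha /andP[l1 l2].
have /andP[q0 q1] := q_bounds a i ha.
set q := \sum_z p i z * a z in q0 q1 *.
set A := 1 - lam * q + 2 * lam ^+ 2 * q ^+ 2.
set B := lam + 2 * lam ^+ 2 * (1 - 2 * q).
apply: (@le_trans _ _ (\sum_z p i z * (A + B * a z))).
  apply: ler_sum => z _; apply: ler_wpM2l; first exact: p0_ge0.
  case/andP: (ha z) => a0 a1.
  have hu : lam * (a z - q) <= 1 by nra.
  have h := expR_quad _ hu.
  have : 0 <= lam ^+ 2 * (a z - a z ^+ 2).
    by apply: mulr_ge0; [apply: sqr_ge0 | rewrite expr2; nra].
  rewrite /A /B !expr2 in h *; nra.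
have -> : \sum_z p i z * (A + B * a z) = A * \sum_z p i z + B * q.
  rewrite big_distrr [X in _ = _ + X]big_distrr -big_split /=.
  by apply: eq_bigr => z _; ring.
rewrite p0_row // mulr1.
have := expR_ge1Dx (2 * lam ^+ 2 * q).
have : 0 <= lam ^+ 2 * q ^+ 2 by apply: mulr_ge0; apply: sqr_ge0.
rewrite /A /B; lra.
Qed.

Lemma mgf (a : 'I_N.+1 -> R) (lam : R) :
  (forall z, 0 <= a z <= 1) -> -(1/2) <= lam <= 1/2 ->
  Exp t xi (fun e => expR (lam * (\sum_z a z * (e z)%:R
      - \sum_(i < size s) \sum_z p i z * a z)))
  <= expR (2 * lam ^+ 2 * \sum_(i < size s) \sum_z p i z * a z).
Proof.
move=> ha hl.
set mu := \sum_(i < size s) _.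
have -> : Exp t xi (fun e => expR (lam * (\sum_z a z * (e z)%:R - mu))) =
   Exp t xi (fun e => expR (- (lam * mu)) * expR (\sum_z (lam * a z) * (e z)%:R)).
  apply: Exp_ext => m f; rewrite -expRD; congr expR.
  rewrite mulrBr addrC; congr (_ + _).
  by rewrite big_distrr /=; apply: eq_bigr => z _; rewrite mulrA.
rewrite Exp_scale Exp_expR /mu mulr_sumr -sumrN expR_sum -big_split /=.
rewrite mulr_sumr expR_sum; apply: ler_prod => i _; apply/andP; split.
  apply: mulr_ge0; first exact: expR_ge0.
  by apply: sumr_ge0 => z _; apply: mulr_ge0; [apply: p0_ge0 | apply: expR_ge0].
apply: le_trans (factor_bound a lam i ha hl); rewrite le_eqVlt; apply/orP; left; apply/eqP.
rewrite mulr_sumr; apply: eq_bigr => z _.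
by rewrite mulrCA -expRD; congr (_ * expR _); ring.
Qed.

Lemma fourth (a : 'I_N.+1 -> R) : (forall z, 0 <= a z <= 1) ->
  Exp t xi (fun e => (\sum_z a z * (e z)%:R
      - \sum_(i < size s) \sum_z p i z * a z) ^+ 4)
  <= 768 * expR 1 * (1 + \sum_(i < size s) \sum_z p i z * a z) ^+ 2.
Proof.
move=> ha.
set mu := \sum_(i < size s) _.
have mu0 : 0 <= mu by apply: sumr_ge0 => i _; case/andP: (q_bounds a i ha).
set L := 1 + mu.
have L1 : 1 <= L by rewrite /L; lra.
set sq := Num.sqrt L.
have sq2 : sq ^+ 2 = L by rewrite /sq sqr_sqrtr //; lra.
have sq0 : 0 <= sq by apply: sqrtr_ge0.
have sq1 : 1 <= sq by rewrite expr2 in sq2; nra.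
set lam := (2 * sq)^-1.
have hlam : lam * (2 * sq) = 1 by rewrite /lam mulVf //; apply: lt0r_neq0; lra.
have hl : -(1/2) <= lam <= 1/2 by apply/andP; split; nra.
have hl' : -(1/2) <= - lam <= 1/2 by apply/andP; split; nra.
have key : lam ^+ 4 * (16 * L ^+ 2) = 1.
  rewrite -sq2 /lam; field; apply: lt0r_neq0; lra.
have pw : forall X : R, X ^+ 4 <= 384 * L ^+ 2 * (expR (lam * X) + expR ((- lam) * X)).
  move=> X; have := pow4_le (lam * X).
  rewrite mulNr exprMn => h.
  have -> : X ^+ 4 = 16 * L ^+ 2 * (lam ^+ 4 * X ^+ 4).
    by rewrite mulrA (mulrC _ (lam ^+ 4)) key mul1r.
  have : 0 <= 16 * L ^+ 2 by apply: mulr_ge0; [lra | apply: sqr_ge0].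
  nra.
apply: le_trans (@Exp_mono _ (fun e => 384 * L ^+ 2 *
   (expR (lam * (\sum_z a z * (e z)%:R - mu)) +
    expR ((- lam) * (\sum_z a z * (e z)%:R - mu)))) _) _.
  by move=> f; apply: pw.
rewrite Exp_scale Exp_add.
have h1 := mgf a lam ha hl.
have h2 := mgf a (- lam) ha hl'.
have hb : 2 * lam ^+ 2 * mu <= 1.
  have : lam ^+ 2 * (4 * L) = 1.
    by rewrite -sq2 /lam; field; apply: lt0r_neq0; lra.
  rewrite /L => h; nra.
have e1 : expR (2 * lam ^+ 2 * mu) <= expR 1 by rewrite ler_expR.
rewrite sqrrN in h2.
have : 0 <= 384 * L ^+ 2 by apply: mulr_ge0; [lra | apply: sqr_ge0].
rewrite -/mu in h1 h2.
nra.
Qed.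

End E.

Lemma part1 (delta c2 cs as_ : R) :
  0 < delta ->
  (forall N : nat, (0 < N)%N -> forall x y : 'I_N.+1,
     p0 ((N%:R) ^+ 2 * delta) x y <= c2 * (N%:R)^-1 / Num.sqrt delta) ->
  (forall N : nat, (0 < N)%N -> forall xi : config N, inX cs as_ xi ->
     forall x : 'I_N.+1, w delta xi x <= c2 * cs / Num.sqrt delta).
Proof.
move=> d0 hp N N0 xi /andP[hm _] x.
have t0 : 0 <= (N%:R : R) ^+ 2 * delta by rewrite mulr_ge0 ?exprn_ge0 // ltW.
rewrite /w (@Exp_occ N _ xi t0).
set B := c2 * (N%:R)^-1 / Num.sqrt delta.
have B0 : 0 <= B by apply: le_trans (hp N N0 x x); apply: p0_ge0.
apply: (@le_trans _ _ (\sum_(i < size (particles xi)) B)).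
  by apply: ler_sum => i _; apply: hp.
rewrite sumr_const card_ord size_particles -mulr_natl.
apply: le_trans (ler_wpM2r B0 hm) _.
have Nn : (N%:R : R) != 0 by rewrite pnatr_eq0 -lt0n.
rewrite /B le_eqVlt; apply/orP; left; apply/eqP.
field.
by rewrite Nn andbT; apply/eqP => /eqP; rewrite sqrtr_eq0 leNgt d0.
Qed.

Lemma tail_bound N (t : R) (xi : config N) (t0 : 0 <= t) (cs as_ K : R) :
  (mass xi)%:R <= cs * N%:R ->
  (forall x, Exp t xi (fun e => (e x)%:R) <= K) ->
  1 - Prob t xi (inX cs as_) <=
    N.+1%:R * (expR ((expR 1 - 1) * K) * expR (- (N%:R `^ as_))).
Proof.
move=> hm hK; rewrite /Prob.
have -> : 1 - Exp t xi (fun e => (inX cs as_ e)%:R) =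
    Exp t xi (fun e => 1 + (-1) * (inX cs as_ e)%:R).
  by rewrite Exp_add Exp_scale Exp_cst // mulN1r.
set a := N%:R `^ as_.
apply: le_trans (@Exp_mono N t xi t0 _ (fun e => \sum_x expR (- a) * expR (e x)%:R) _) _.
  move=> f.
  have hm' : (mass (occ f))%:R <= cs * N%:R by rewrite mass_occ size_particles.
  rewrite /inX hm' /=.
  have [/forallP H|/forallPn [x Hx]] := boolP [forall x : 'I_N.+1, (x != ord0) ==> ((occ f x)%:R <= a)].
    by rewrite mulr1 addrN; apply: sumr_ge0 => x _; apply: mulr_ge0; apply: expR_ge0.
  rewrite mulr0 addr0 (bigD1 x) //=.
  move: Hx; rewrite negb_imply => /andP[_]; rewrite -ltNge => Hx.
  have : 1 <= expR (- a) * expR (occ f x)%:R.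
    rewrite -expRD; have := expR_ge1Dx (- a + (occ f x)%:R); lra.
  have : 0 <= \sum_(i | i != x) expR (- a) * expR (occ f i)%:R.
    by apply: sumr_ge0 => z _; apply: mulr_ge0; apply: expR_ge0.
  lra.
rewrite Exp_sum.
apply: (@le_trans _ _ (\sum_(x : 'I_N.+1) expR ((expR 1 - 1) * K) * expR (- a))).
  apply: ler_sum => x _; rewrite Exp_scale // mulrC; apply: ler_wpM2r; first exact: expR_ge0.
  apply: le_trans (@Exp_expocc N t xi t0 x) _; rewrite ler_expR.
  apply: ler_wpM2l; last exact: hK.
  by rewrite subr_ge0 ltW // expR_gt1.
by rewrite sumr_const card_ord mulr_natl.
Qed.

Lemma sum_eq_le1 (m n k : nat) : \sum_(m <= y < n) ((y == k)%:R : R) <= 1.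
Proof.
have [hk|hk] := boolP (k \in index_iota m n).
  rewrite (bigD1_seq k) //= ?iota_uniq // eqxx big1_seq ?addr0 // => y /andP[/negbTE -> _].
  by [].
rewrite big1_seq // => y /andP[_ yin]; case: eqP => // yk.
by rewrite -yk yin in hk.
Qed.

Definition win N (x l : nat) (z : 'I_N.+1) : R :=
  \sum_(x <= y < x + l) (((inord y : 'I_N.+1) == z)%:R).

Lemma win_sum N x l (g : 'I_N.+1 -> R) :
  \sum_(x <= y < x + l) g (inord y) = \sum_z win N x l z * g z.
Proof.
rewrite /win; under [RHS]eq_bigr do rewrite big_distrl /=.
rewrite exchange_big /=; apply: eq_bigr => y _.
rewrite (bigD1 (inord y)) //= eqxx mul1r big1 ?addr0 // => z.
by rewrite eq_sym => /negbTE ->; rewrite mul0r.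
Qed.

Lemma win_bounds N x l z : (x + l <= N.+1)%N -> 0 <= @win N x l z <= 1.
Proof.
move=> hl; apply/andP; split; first by apply: sumr_ge0 => y _; case: eqP.
rewrite /win (eq_big_nat _ _ (F2 := fun y => ((y == (z : nat))%:R : R))).
  exact: sum_eq_le1.
move=> y /andP[_ hy].
have hyN : (y < N.+1)%N by apply: leq_trans hl.
by rewrite -(inj_eq val_inj) /= inordK.
Qed.

Lemma decay (a : R) (k : nat) : 0 < a -> exists C : R, 0 <= C /\
  forall N : nat, (0 < N)%N ->
    N.+1%:R * expR (- (N%:R `^ a)) <= C * (N%:R^-1) ^+ k.
Proof.
move=> a0.
set M := Num.truncn ((k.+1)%:R / a).
have hM : (k.+1)%:R <= a * (M.+1)%:R.
  have := truncn_le_nat ((k.+1)%:R / a) M; rewrite leqnn => /esym h.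
  have := h; rewrite ltr_pdivrMr // mulrC => h'; exact: ltW.
set F : R := (M.+1`!)%:R.
have F0 : 0 < F by rewrite ltr0n fact_gt0.
exists (2 * F); split; first by apply: mulr_ge0; [lra | exact: ltW].
move=> N N0.
have Nr1 : 1 <= (N%:R : R) by rewrite ler1n.
set y := N%:R `^ a.
have y0 : 0 <= y by apply: powR_ge0.
have hy := @expR_pow y M y0.
have hyM : y ^+ M.+1 = N%:R `^ (a * (M.+1)%:R).
  by rewrite powRrM powR_mulrn.
have hNk : (N%:R : R) ^+ k.+1 <= y ^+ M.+1.
  rewrite hyM -powR_mulrn; last lra.
  exact: ler_powR.
set Q := (N%:R : R) ^+ k.
have Q0 : 0 < Q by apply: exprn_gt0; lra.
have hQ : (N%:R : R) ^+ k.+1 = N%:R * Q by rewrite exprS.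
set E := expR y.
have E0 : 0 < E by apply: expR_gt0.
have hE : N%:R * Q <= F * E.
  rewrite -hQ; apply: le_trans hNk _.
  rewrite -ler_pdivrMl // mulrC; exact: hy.
rewrite expRN exprVn -/Q -/E.
have -> : N.+1%:R * E^-1 = (N.+1%:R * Q) / (E * Q).
  by field; apply/andP; split; apply: lt0r_neq0.
have -> : 2 * F * Q^-1 = (2 * F * E) / (E * Q).
  by field; apply/andP; split; apply: lt0r_neq0.
rewrite ler_pM2r ?invr_gt0 ?mulr_gt0 //.
rewrite -addn1 natrD.
nra.
Qed.

Lemma Prob_ge0 N (t : R) (xi : config N) (t0 : 0 <= t) A : 0 <= Prob t xi A.
Proof.
rewrite /Prob -(@Exp_cst N t xi t0 0); apply: Exp_mono => //.
Qed.

Lemma part2a (delta c2 cs as_ : R) :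
  0 < delta ->
  (forall N : nat, (0 < N)%N -> forall x y : 'I_N.+1,
     p0 ((N%:R) ^+ 2 * delta) x y <= c2 * (N%:R)^-1 / Num.sqrt delta) ->
  0 < as_ ->
  (forall n : int, exists c' : R,
        forall N : nat, (0 < N)%N -> forall xi : config N, inX cs as_ xi ->
          Prob ((N%:R) ^+ 2 * delta) xi (inX cs as_) >= 1 - c' * ((N%:R)^-1) ^ n).
Proof.
move=> d0 hp a0 n.
have P1 := @part1 delta c2 cs as_ d0 hp.
set K := c2 * cs / Num.sqrt delta.
case: n => k.
  have [C [C0 HC]] := @decay as_ k a0.
  exists (expR ((expR 1 - 1) * K) * C) => N N0 xi hX.
  have t0 : 0 <= (N%:R : R) ^+ 2 * delta by rewrite mulr_ge0 ?exprn_ge0 // ltW.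
  have hm : (mass xi)%:R <= cs * N%:R by case/andP: hX.
  have := @tail_bound N _ xi t0 cs as_ K hm (fun x => P1 N N0 xi hX x).
  have := HC N N0.
  have := expR_ge0 ((expR 1 - 1) * K).
  rewrite /exprz.
  set E := expR ((expR 1 - 1) * K).
  set Z := expR (- (N%:R `^ as_)).
  set Q := (N%:R^-1) ^+ k.
  nra.
exists 1 => N N0 xi hX.
have t0 : 0 <= (N%:R : R) ^+ 2 * delta by rewrite mulr_ge0 ?exprn_ge0 // ltW.
have := @Prob_ge0 N _ xi t0 (inX cs as_).
rewrite /exprz exprVn invrK mul1r.
have : 1 <= (N%:R : R) ^+ k.+1 by apply: exprn_ege1; rewrite ler1n.
lra.
Qed.

Lemma final_arith (L Nb K D mu Y : R) : 1 <= L -> 1 <= Nb -> Nb <= 2 * L ->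
  0 <= mu -> mu <= L * K -> 0 <= D -> Y <= D * (1 + mu) ^+ 2 ->
  L^-1 ^+ 4 * Y <= D * (1 + K) ^+ 2 * 4 * (Nb ^+ 2)^-1.
Proof.
move=> L1 Nb1 NbL mu0 muK D0 hY.
have Y0 : 0 <= L^-1 ^+ 4 by rewrite exprn_ge0 // invr_ge0; lra.
have i1 : (1 + mu) ^+ 2 <= L ^+ 2 * (1 + K) ^+ 2.
  rewrite -exprMn !expr2; apply: ler_pM; try lra.
have i2 : L^-1 ^+ 4 * Y <= D * (1 + K) ^+ 2 * L^-1 ^+ 2.
  apply: le_trans (ler_wpM2l Y0 hY) _.
  apply: le_trans (ler_wpM2l Y0 (ler_wpM2l D0 i1)) _.
  rewrite le_eqVlt; apply/orP; left; apply/eqP.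
  field; apply: lt0r_neq0; lra.
apply: le_trans i2 _.
have i3 : L^-1 ^+ 2 <= 4 * (Nb ^+ 2)^-1.
  have -> : L^-1 ^+ 2 = 4 * (Nb ^+ 2)^-1 * (Nb ^+ 2 / (4 * L ^+ 2)).
    field; apply/andP; split; apply: lt0r_neq0; lra.
  apply: ler_piMr.
    by apply: mulr_ge0; [lra | rewrite invr_ge0 exprn_ge0 //; lra].
  rewrite ler_pdivrMr ?mul1r; last by apply: mulr_gt0; [lra | apply: exprn_gt0; lra].
  have -> : 4 * L ^+ 2 = (2 * L) ^+ 2 by ring.
  by rewrite !expr2; apply: ler_pM; lra.
have : 0 <= D * (1 + K) ^+ 2 by apply: mulr_ge0 => //; apply: sqr_ge0.
move: i3; set u := L^-1 ^+ 2; set v := (Nb ^+ 2)^-1; set C := D * (1 + K) ^+ 2.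
move=> i3 C0.
rewrite -mulrA; apply: ler_wpM2l => //.
Qed.

Lemma part2b (delta c2 cs as_ b : R) :
  0 < delta ->
  (forall N : nat, (0 < N)%N -> forall x y : 'I_N.+1,
     p0 ((N%:R) ^+ 2 * delta) x y <= c2 * (N%:R)^-1 / Num.sqrt delta) ->
  0 < b -> b < 1 ->
     (exists c : R,
        forall N : nat, (0 < N)%N -> forall xi : config N, inX cs as_ xi ->
          let l := Num.truncn ((N%:R : R) `^ b) in
          forall x : nat, (x <= N - l + 1)%N ->
            Exp ((N%:R) ^+ 2 * delta) xi
              (fun eta => (Aavg l x (fun y => (eta (inord y))%:R)
                           - Aavg l x (fun y => w delta xi (inord y))) ^+ 4)
            <= c * ((N%:R)^-1) `^ (2 * b)).
Proof.
move=> d0 hp b0 b1.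
have P1 := @part1 delta c2 cs as_ d0 hp.
set K := c2 * cs / Num.sqrt delta.
exists (768 * expR 1 * (1 + K) ^+ 2 * 4) => N N0 xi hX; cbv zeta => x hx.
have t0 : 0 <= (N%:R : R) ^+ 2 * delta by rewrite mulr_ge0 ?exprn_ge0 // ltW.
set t := (N%:R : R) ^+ 2 * delta in t0 *.
have Nr1 : 1 <= (N%:R : R) by rewrite ler1n.
set Nb := (N%:R : R) `^ b in hx *.
set l := Num.truncn Nb in hx *.
have Nb1 : 1 <= Nb by have := ler_powR Nr1 (ltW b0); rewrite powRr0.
have NbN : Nb <= N%:R by apply: ler1_powR => //; exact: ltW.
have hl1 : (l%:R : R) <= Nb by rewrite /l truncn_le; lra.
have hl2 : Nb < (l.+1)%:R.
  have h : (Num.truncn Nb <= l)%N by [].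
  by rewrite truncn_le_nat in h.
have l1 : (1 <= l)%N by rewrite /l truncn_ge_nat //; lra.
have lN : (l <= N)%N by rewrite -(ler_nat R); lra.
have hxl : (x + l <= N.+1)%N by lia.
set a := win N x l.
have ha : forall z, 0 <= a z <= 1 by move=> z; exact: win_bounds.
set mu := \sum_(i < size (particles xi)) \sum_z p0 t (nth ord0 (particles xi) i) z * a z.
have hmu : \sum_(x <= y < x + l) w delta xi (inord y) = mu.
  rewrite win_sum /mu exchange_big /=; apply: eq_bigr => z _.
  rewrite /w -/t (@Exp_occ N t xi t0 z) big_distrr /=.
  by apply: eq_bigr => i _; rewrite mulrC.
have mu0 : 0 <= mu.
  by apply: sumr_ge0 => i _; apply: sumr_ge0 => z _; apply: mulr_ge0; [apply: p0_ge0|case/andP: (ha z)].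
have muK : mu <= l%:R * K.
  rewrite -hmu; apply: (@le_trans _ _ (\sum_(x <= y < x + l) K)).
    by apply: ler_sum => y _; apply: P1.
  by rewrite sumr_const_nat addKn mulr_natl.
have -> : Exp t xi (fun eta => (Aavg l x (fun y => (eta (inord y))%:R)
                    - Aavg l x (fun y => w delta xi (inord y))) ^+ 4) =
          Exp t xi (fun eta => (l%:R^-1) ^+ 4 *
                    (\sum_z a z * (eta z)%:R - mu) ^+ 4).
  apply: Exp_ext => m f; rewrite /Aavg -mulrBr exprMn hmu.
  by rewrite (@win_sum N x l (fun z => ((occ f z)%:R : R))).
rewrite Exp_scale.
have F4 := @fourth N t xi t0 a ha.
have Npos : (0 : R) < N%:R by lra.
have hNb : (N%:R^-1) `^ (2 * b) = (Nb ^+ 2)^-1.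
  have h1 : (N%:R^-1) `^ (2 * b) * N%:R `^ (2 * b) = 1.
    have hN0 : (N%:R : R) != 0 by apply: lt0r_neq0.
    have hi : 0 <= (N%:R : R)^-1 by rewrite invr_ge0 ltW.
    by rewrite -(powRM _ hi (ltW Npos)) mulVf // powR1.
  have h2 : (N%:R : R) `^ (2 * b) = Nb ^+ 2.
    by rewrite mulrC powRrM powR_mulrn // powR_ge0.
  rewrite h2 in h1; apply: (mulIf (x := Nb ^+ 2)).
    by apply: lt0r_neq0; apply: exprn_gt0; lra.
  by rewrite h1 mulVf //; apply: lt0r_neq0; apply: exprn_gt0; lra.
rewrite hNb.
have NbL : Nb <= 2 * l%:R.
  have : (1 : R) <= l%:R by rewrite ler1n.
  by rewrite -natr1 in hl2; lra.
have L1 : (1 : R) <= l%:R by rewrite ler1n.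
have D0 : (0 : R) <= 768 * expR 1 by apply: mulr_ge0; [exact: ler0n | exact: expR_ge0].
exact: (@final_arith (l%:R) Nb K (768 * expR 1) mu _ L1 Nb1 NbL mu0 muK D0 F4).
Qed.
End S.

Theorem mainTheorem8 (R : realType) (delta c2 cs as_ : R) :
  0 < delta ->
  (forall N : nat, (0 < N)%N -> forall x y : 'I_N.+1,
     p0 ((N%:R) ^+ 2 * delta) x y <= c2 * (N%:R)^-1 / Num.sqrt delta) ->
  0 < cs -> 0 < as_ ->
  (forall N : nat, (0 < N)%N -> forall xi : config N, inX cs as_ xi ->
     forall x : 'I_N.+1, w delta xi x <= c2 * cs / Num.sqrt delta)
  /\
  (forall b : R, 0 < b -> as_ < b / 2 -> b + as_ < 1 ->
     (forall n : int, exists c' : R,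
        forall N : nat, (0 < N)%N -> forall xi : config N, inX cs as_ xi ->
          Prob ((N%:R) ^+ 2 * delta) xi (inX cs as_) >= 1 - c' * ((N%:R)^-1) ^ n)
     /\
     (exists c : R,
        forall N : nat, (0 < N)%N -> forall xi : config N, inX cs as_ xi ->
          let l := Num.truncn ((N%:R : R) `^ b) in
          forall x : nat, (x <= N - l + 1)%N ->
            Exp ((N%:R) ^+ 2 * delta) xi
              (fun eta => (Aavg l x (fun y => (eta (inord y))%:R)
                           - Aavg l x (fun y => w delta xi (inord y))) ^+ 4)
            <= c * ((N%:R)^-1) `^ (2 * b))).
Proof.
move=> d0 hp cs0 as0; split.
  exact: (@part1 R delta c2 cs as_ d0 hp).
move=> b b0 hb1 hb2; split.
  exact: (@part2a R delta c2 cs as_ d0 hp as0).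
apply: (@part2b R delta c2 cs as_ b d0 hp b0); lra.
Qed.
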